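(* Let $\mu\leq\nu$ and $\lambda$ be infinite cardinals with $2^{\nu^{<\mu}}\leq\lambda$. If $X_1$ is a $[\mu,\nu]$-compact topological space and $X_2$ is an initially $\lambda$-compact topological space, then $X_1\times X_2$ is $[\mu,\nu]$-compact. If moreover every cardinal in the interval $[\mu,\nu]$ is regular, the same conclusion holds under the weaker assumption $2^{\nu}\leq\lambda$ in place of $2^{\nu^{<\mu}}\leq\lambda$.
   Context: No separation axioms are assumed; all topological spaces are nonempty. For infinite cardinals $\mu\leq\nu$, a space is $[\mu,\nu]$-compact if every open cover of cardinality at most $\nu$ has a subcover of cardinality $<\mu$. A space is initially $\lambda$-compact if it is $[\omega,\lambda]$-compact. *)

(* Defs.v *)
From HB Require Import structures.
From mathcomp Require Import all_boot all_order.
From mathcomp Require Import all_classical.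
From mathcomp Require Import topology.
Set Implicit Arguments. Unset Strict Implicit. Unset Printing Implicit Defensive.
Local Open Scope classical_set_scope.
Local Open Scope card_scope.

(* Cardinals are represented by types (up to bijection); |A| <= |B| is
   the library's [card_le] (existence of an injection A -> B). *)

Definition card_lt T U (A : set T) (B : set U) :=
  A #<= B /\ ~ (B #<= A).

Definition interval_compact (mu nu : Type) (X : topologicalType) :=
  forall C : set (set X),
    (forall U, C U -> open U) ->
    \bigcup_(U in C) U = setT ->
    C #<= [set: nu] ->
    exists D : set (set X),
      [/\ D `<=` C, card_lt D [set: mu] & \bigcup_(U in D) U = setT].

Definition initially_compact (lam : Type) (X : topologicalType) :=
  interval_compact nat lam X.

(* A representative of the cardinal nu^{<mu}: the set of pairs (A, f) with
   A a subset of mu of cardinality < |mu| and f : A -> nu, i.e. the union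
   over "lengths" A below mu of the function spaces nu^A. *)
Definition pow_lt (nu mu : Type) : Type :=
  { A : { A : set mu | card_lt A [set: mu] } & (sig (proj1_sig A) -> nu) }.

Definition regular_card (T : Type) (K : set T) :=
  forall (I : Type) (F : I -> set T),
    card_lt [set: I] K ->
    (forall i, F i `<=` K) ->
    (forall i, card_lt (F i) K) ->
    \bigcup_i F i <> K.

(* Main.v *)
Require Import Defs.
From HB Require Import structures.
From mathcomp Require Import all_boot all_order.
From mathcomp Require Import all_classical.
From mathcomp Require Import topology.
From mathcomp Require Import wochoice.
Set Implicit Arguments. Unset Strict Implicit. Unset Printing Implicit Defensive.
Local Open Scope classical_set_scope.
Local Open Scope card_scope.

Lemma le_of_inj T U (A : set T) (B : set U) (f : T -> U) :
  (forall x, A x -> B (f x)) -> {in A &, injective f} -> A #<= B.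
Proof.
move=> fAB finj; apply/card_subP; exists (f @` A); first exact: inj_card_eq.
by move=> _ [x Ax <-]; apply: fAB.
Qed.

Lemma inj_of_le T U (A : set T) (B : set U) (u0 : U) : A #<= B ->
  exists f : T -> U, (forall x, A x -> B (f x)) /\ {in A &, injective f}.
Proof.
move=> /card_leP[f].
exists (fun x => match pselect (A x) with
   left h => val (f (SigSub (mem_set h))) | right _ => u0 end).
split.
  move=> x Ax; case: pselect => // h; exact: set_valP.
move=> x y /set_mem Ax /set_mem Ay; case: pselect => // hx; case: pselect => // hy.
move=> /val_inj/(@inj _ _ _ f); rewrite !in_setE => /(_ I I) [] //.
Qed.

Lemma min_card T (AA : set (set T)) : AA !=set0 ->
  exists2 B0, AA B0 & forall B, AA B -> B0 #<= B.
Proof.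
move=> [B1 AAB1].
have [[t0 _]|nT] := pselect (exists t : T, True); last first.
  exists B1 => // B _; have -> : B1 = set0.
    by apply/seteqP; split => // x; exfalso; apply: nT; exists x.
  exact: card_ge0.
pose P (Z : set (set T -> T)) :=
  (forall phi, Z phi -> forall B, AA B -> B (phi B)) /\
  (forall B, AA B -> forall phi psi, Z phi -> Z psi -> phi B = psi B -> phi = psi).
have chainP : forall F : set (set (set T -> T)), F `<=` P -> total_on F subset ->
      P (\bigcup_(X in F) X).
  move=> F FP Ftot; rewrite /P in FP *; split.
    by move=> phi [Z FZ Zphi] B AAB; exact: (proj1 (FP Z FZ) phi Zphi B AAB).
  move=> B AAB phi psi [Z1 FZ1 Z1phi] [Z2 FZ2 Z2psi].
  have [Z12|Z21] := Ftot _ _ FZ1 FZ2.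
    by apply: (proj2 (FP Z2 FZ2)) => //; apply: Z12.
  by apply: (proj2 (FP Z1 FZ1)) => //; apply: Z21.
have [Z [[PZ1 PZ2] Zmax]] := Zorn_bigcup chainP.
have [[B0 [AAB0 B0sub]]|] := pselect (exists B0, AA B0 /\
    forall b, B0 b -> exists2 phi, Z phi & phi B0 = b).
  exists B0 => // B AAB.
  have /choice[Phi HPhi] : forall b, exists phi, B0 b -> Z phi /\ phi B0 = b.
    move=> b; have [Bb|nBb] := pselect (B0 b).
      by have [phi Zphi <-] := B0sub b Bb; exists phi.
    by exists (fun _ => b).
  apply: (@le_of_inj _ _ _ _ (fun b => Phi b B)).
    by move=> b B0b; exact: (PZ1 _ (proj1 (HPhi b B0b)) B AAB).
  move=> b b' /set_mem B0b /set_mem B0b' eqB.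
  have := PZ2 B AAB _ _ (proj1 (HPhi b B0b)) (proj1 (HPhi b' B0b')) eqB.
  move=> eqPhi; have E1 := proj2 (HPhi b B0b); have E2 := proj2 (HPhi b' B0b').
  by rewrite -E1 -E2 eqPhi.
move=> nex.
have /choice[chi Hchi] : forall B, exists b, AA B -> B b /\
    ~ (exists2 phi, Z phi & phi B = b).
  move=> B; have [AAB|nAAB] := pselect (AA B); last by exists t0.
  apply: contrapT => nb; apply: nex; exists B; split => // b Bb.
  apply: contrapT => nphi; apply: nb; exists b => _; split => //.
have chiZ : ~ Z chi.
  move=> Zchi; have [_ ] := Hchi B1 AAB1; apply; by exists chi.
exfalso; apply: (Zmax (Z `|` [set chi])).
  split; first by move=> phi Zphi; left.
  by move=> /(_ chi (or_intror erefl)).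
split.
  move=> phi [Zphi|->] B AAB; first exact: PZ1 phi Zphi B AAB.
  exact: (proj1 (Hchi B AAB)).
move=> B AAB phi psi [Zphi|->] [Zpsi|->] //.
- exact: PZ2 B AAB phi psi Zphi Zpsi.
- move=> e; exfalso; have [_] := Hchi B AAB; apply; by exists phi.
- move=> e; exfalso; have [_] := Hchi B AAB; apply; by exists psi.
Qed.

Lemma eq_le T U (A : set T) (B : set U) : A #= B -> A #<= B.
Proof. by move/card_eqPle => []. Qed.

Lemma eq_ge T U (A : set T) (B : set U) : A #= B -> B #<= A.
Proof. by move/card_eqPle => []. Qed.

Lemma card_le_total T U (A : set T) (B : set U) : A #<= B \/ B #<= A.
Proof.
pose AA := fun X : set (T + U) => X = inl @` A \/ X = inr @` B.
have [|B0 [->|->] HB0] := @min_card _ AA; first by exists (inl @` A); left.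
  left; have := HB0 (inr @` B) (or_intror erefl).
  have eA : @inl T U @` A #= A by apply: inj_card_eq => x y _ _ [].

  have eB : @inr T U @` B #= B by apply: inj_card_eq => x y _ _ [].

  move=> h; apply: card_le_trans (eq_ge eA) _; exact: card_le_trans h (eq_le eB).
right; have := HB0 (inl @` A) (or_introl erefl).
have eA : @inl T U @` A #= A by apply: inj_card_eq => x y _ _ [].

have eB : @inr T U @` B #= B by apply: inj_card_eq => x y _ _ [].

move=> h; apply: card_le_trans (eq_ge eB) _; exact: card_le_trans h (eq_le eA).
Qed.

Lemma le_nonempty T U (A : set T) (B : set U) : A #<= B -> A !=set0 -> B !=set0.
Proof.
move=> AB [a Aa]; apply/set0P/eqP => B0; move: AB; rewrite B0 => /card_le0P A0.
by rewrite A0 in Aa.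
Qed.

Lemma inj_of_le' T U (A : set T) (B : set U) : A #<= B -> A !=set0 ->
  exists f : T -> U, (forall x, A x -> B (f x)) /\ {in A &, injective f}.
Proof.
move=> AB /(le_nonempty AB) [u0 _]; exact: inj_of_le u0 AB.
Qed.

Lemma card_leX T T' U U' (A : set T) (A' : set T') (B : set U) (B' : set U') :
  A #<= A' -> B #<= B' -> A `*` B #<= A' `*` B'.
Proof.
move=> AA BB.
have [->|/set0P[a Aa]] := eqVneq A set0; first by rewrite set0X; exact: card_ge0.
have [->|/set0P[b Bb]] := eqVneq B set0; first by rewrite setX0; exact: card_ge0.
have [f [fA finj]] := inj_of_le' AA (ex_intro _ a Aa).
have [g [gB ginj]] := inj_of_le' BB (ex_intro _ b Bb).
apply: (@le_of_inj _ _ _ _ (fun p => (f p.1, g p.2))).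
  by move=> [x y] [/= Ax By]; split; [exact: fA|exact: gB].
move=> [x y] [x' y'] /set_mem [/= Ax By] /set_mem [/= Ax' By'] [] e1 e2.
by rewrite (finj x x' (mem_set Ax) (mem_set Ax') e1) (ginj y y' (mem_set By) (mem_set By') e2).
Qed.

Lemma card_leU T (B : set T) (C : set T) (a0 a1 : T) :
  B a0 -> B a1 -> a0 <> a1 -> C #<= B -> B `|` C #<= B `*` B.
Proof.
move=> Ba0 Ba1 a01 CB.
have [i [iC iinj]] := inj_of_le a0 CB.
apply: (@le_of_inj _ _ _ _ (fun x => if pselect (B x) then (x, a0) else (i x, a1))).
  move=> x xBC; case: pselect => [Bx|nBx]; first by split.
  split => //; apply: iC; by case: xBC.
move=> x y /set_mem xBC /set_mem yBC.
case: pselect => [Bx|nBx]; case: pselect => [By|nBy] /=.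
- by case.
- by case=> _ e; case: a01.
- by case=> _ e; case: a01.
- case=> e; apply: iinj e; apply: mem_set.
  + by case: xBC.
  + by case: yBC.
Qed.

Lemma infinite_inj T (A : set T) : infinite_set A ->
  exists e : nat -> T, (forall n, A (e n)) /\ injective e.
Proof.
move=> Ainf; have /infiniteP NA := Ainf.
have [e [eA einj]] := inj_of_le' NA (ex_intro _ 0%N I).
exists e; split; first by move=> n; exact: eA.
by move=> m n; apply: einj; rewrite in_setE.
Qed.

Section Hess.
Variables (T : Type) (A : set T).

Definition gdom (G : set ((T * T) * T)) := [set x | exists v, G ((x, x), v)].

Definition Pg (G : set ((T * T) * T)) :=
  [/\ (forall p v, G (p, v) -> [/\ gdom G p.1, gdom G p.2 & gdom G v]),
      gdom G `<=` A,
      (forall x y, gdom G x -> gdom G y -> exists v, G ((x, y), v)),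
      (forall p v v', G (p, v) -> G (p, v') -> v = v') &
      (forall p p' v, G (p, v) -> G (p', v) -> p = p')].

Lemma Pg_le G : Pg G -> gdom G `*` gdom G #<= gdom G.
Proof.
move=> [Gcl GA Gtot Gfun Ginj].
have /choice[h Hh] : forall p : T * T, exists v, gdom G p.1 -> gdom G p.2 -> G (p, v).
  move=> [p1 p2]; have [[x1 x2]|np] := pselect (gdom G p1 /\ gdom G p2).
    by have [v Gv] := Gtot _ _ x1 x2; exists v => _ _.
  exists p1 => a b; exfalso; exact: np.
apply: (@le_of_inj _ _ _ _ h).
  by move=> p [p1 p2]; have [] := Gcl _ _ (Hh p p1 p2).
move=> p p' /set_mem [p1 p2] /set_mem [p1' p2'] e.
apply: (Ginj p p' (h p)); first exact: Hh.
by rewrite e; apply: Hh.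
Qed.

Lemma hess : infinite_set A -> A `*` A #<= A.
Proof.
move=> Ainf; have [e [eA einj]] := infinite_inj Ainf.
pose G0 : set ((T * T) * T) :=
  [set q | exists i j, q = ((e i, e j), e (pickle (i, j)))].
have dG0 : gdom G0 = range e.
  apply/seteqP; split.
    by move=> x [v [i [j [-> _ _]]]]; exists i.
  by move=> _ [i _ <-]; exists (e (pickle (i, i))); exists i, i.
have PG0 : Pg G0.
  rewrite /Pg dG0; split.
  - by move=> [x y] v [i [j [-> -> ->]]]; split; eexists.
  - by move=> _ [i _ <-]; exact: eA.
  - by move=> _ _ [i _ <-] [j _ <-]; exists (e (pickle (i, j))); exists i, j.
  - move=> [x y] v v' [i [j [-> -> ->]]] [i' [j' [ei ej ->]]].
    by rewrite (einj _ _ ei) (einj _ _ ej).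
  - move=> [x y] [x' y'] v [i [j [-> -> ->]]] [i' [j' [-> -> /einj]]].
    by move=> /(pcan_inj pickleK) [-> ->].
pose P' G := G = set0 \/ (Pg G /\ G0 `<=` G).
have chainP : forall F : set (set ((T * T) * T)), F `<=` P' -> total_on F subset ->
    P' (\bigcup_(X in F) X).
  move=> F FP Ftot.
  have hF : forall G q, F G -> G q -> Pg G /\ G0 `<=` G.
    move=> G q FG Gq; case: (FP G FG) => // G0e.
    by rewrite G0e in Gq.
  have [[q [G1 FG1 G1q]]|nq] := pselect (exists q, (\bigcup_(X in F) X) q); last first.
    by left; apply/seteqP; split => // r Ur; case: nq; exists r.
  right; split; last first.
    by move=> r G0r; exists G1 => //; apply: (proj2 (hF G1 q FG1 G1q)).
  have dU : forall x, gdom (\bigcup_(X in F) X) x ->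
      exists2 G, F G & Pg G /\ gdom G x.
    move=> x [v [G FG Gx]]; exists G => //; split; last by exists v.
    exact: (proj1 (hF G _ FG Gx)).
  have dU' : forall G x, F G -> gdom G x -> gdom (\bigcup_(X in F) X) x.
    by move=> G x FG [v Gv]; exists v; exists G.
  split.
  - move=> p v [G FG Gpv]; have [[Gcl _ _ _ _] _] := hF G _ FG Gpv.
    by have [c1 c2 c3] := Gcl p v Gpv; split; apply: (dU' G).
  - by move=> x /dU [G FG [[_ GA _ _ _] Gx]]; exact: GA.
  - move=> x y /dU [G1' FG1' [PG1' Gx]] /dU [G2' FG2' [PG2' Gy]].
    have [S12|S21] := Ftot _ _ FG1' FG2'.
      have [_ _ Gtot _ _] := PG2'.
      have [v Gv] : exists v, G2' ((x, y), v).
        apply: Gtot => //; case: Gx => v Gv; exists v; exact: S12.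
      by exists v; exists G2'.
    have [_ _ Gtot _ _] := PG1'.
    have [v Gv] : exists v, G1' ((x, y), v).
      apply: Gtot => //; case: Gy => v Gv; exists v; exact: S21.
    by exists v; exists G1'.
  - move=> p v v' [Ga FGa Gav] [Gb FGb Gbv].
    have [Sab|Sba] := Ftot _ _ FGa FGb.
      have [[_ _ _ Gfun _] _] := hF Gb _ FGb Gbv.
      by apply: Gfun Gbv; apply: Sab.
    have [[_ _ _ Gfun _] _] := hF Ga _ FGa Gav.
    by apply: Gfun Gav _; apply: Sba.
  - move=> p p' v [Ga FGa Gav] [Gb FGb Gbv].
    have [Sab|Sba] := Ftot _ _ FGa FGb.
      have [[_ _ _ _ Ginj] _] := hF Gb _ FGb Gbv.
      by apply: Ginj Gbv; apply: Sab.
    have [[_ _ _ _ Ginj] _] := hF Ga _ FGa Gav.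
    by apply: Ginj Gav _; apply: Sba.
have [M [PM Mmax]] := Zorn_bigcup chainP.
have G0q : G0 ((e 0%N, e 0%N), e (pickle (0%N, 0%N))) by exists 0%N, 0%N.
have [PgM G0M] : Pg M /\ G0 `<=` M.
  case: PM => // M0; exfalso; apply: (Mmax G0); last by right; split.
  by rewrite M0; split => //; move=> /(_ _ G0q).
set B := gdom M.
have eB : forall n, B (e n).
  move=> n; have : gdom G0 (e n) by rewrite dG0; exists n.
  by move=> [v G0v]; exists v; apply: G0M.
have e01 : e 0%N <> e 1%N by move=> /einj.
have [Mcl MA Mtot Mfun Minj] := PgM.
have hB : B `*` B #<= B := Pg_le PgM.
have [BAB|ABB] := card_le_total B (A `\` B); last first.
  have AB : A #<= B.
    apply: card_le_trans _ (card_le_trans (card_leU (eB 0%N) (eB 1%N) e01 ABB) hB).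
    apply: subset_card_le => x Ax; have [Bx|nBx] := pselect (B x); first by left.
    by right.
  apply: card_le_trans (card_leX AB AB) _; apply: card_le_trans hB _.
  exact: subset_card_le MA.
exfalso; have /card_subP[B' B'B B'AB] := BAB.
have B'le : B' #<= B := eq_le B'B.
have hU : B `|` B' #<= B.
  exact: card_le_trans (card_leU (eB 0%N) (eB 1%N) e01 B'le) hB.
have hk : (B `|` B') `*` (B `|` B') #<= B'.
  apply: card_le_trans (card_leX hU hU) _; apply: card_le_trans hB _.
  exact: eq_ge B'B.
have [k [kB' kinj]] := inj_of_le' hk (ex_intro _ (e 0%N, e 0%N) (conj (or_introl (eB 0%N)) (or_introl (eB 0%N)))).
have [b' B'b'] : B' !=set0 by apply: le_nonempty (eq_ge B'B) _; exists (e 0%N).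
have nBB' : forall x, B' x -> ~ B x by move=> x /B'AB [].
pose G' : set ((T * T) * T) := fun q => M q \/
   [/\ (B `|` B') q.1.1, (B `|` B') q.1.2, ~ (B q.1.1 /\ B q.1.2) & q.2 = k q.1].
have dG' : gdom G' = B `|` B'.
  apply/seteqP; split.
    by move=> x [v [Mx|[Bx _ _ _]]] //; left; exists v.
  move=> x [Bx|B'x]; first by case: Bx => v Mv; exists v; left.
  exists (k (x, x)); right; split => //=; try by right.
  by case=> Bx _; exact: nBB' B'x Bx.
have PG' : Pg G'.
  rewrite /Pg dG'; split.
  - move=> [x y] v [/Mcl[c1 c2 c3]|[c1 c2 _ /= ->]] /=.
      by split; left.
    split => //; right; apply: kB'; exact: (conj c1 c2).
  - move=> x [Bx|B'x]; first exact: MA.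
    by have [] := B'AB x B'x.
  - move=> x y xB yB.
    have [[Bx By]|nxy] := pselect (B x /\ B y).
      by have [v Mv] := Mtot x y Bx By; exists v; left.
    by exists (k (x, y)); right; split.
  - move=> [x y] v v' [Mv|[_ _ nb /= ->]] [Mv'|[_ _ nb' /= ->]] //.
    + exact: Mfun Mv Mv'.
    + by have [/= c1 c2 _] := Mcl _ _ Mv; case: nb'.
    + by have [/= c1 c2 _] := Mcl _ _ Mv'; case: nb.
  - move=> [x y] [x' y'] v [Mv|[c1 c2 _ /= ev]] [Mv'|[c1' c2' _ /= ev']].
    + exact: Minj Mv Mv'.
    + have [_ _ Bv] := Mcl _ _ Mv; have := kB' (x', y') (conj c1' c2').
      by rewrite -ev' => /nBB'.
    + have [_ _ Bv] := Mcl _ _ Mv'; have := kB' (x, y) (conj c1 c2).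
      by rewrite -ev => /nBB'.
    + apply: kinj; [exact: mem_set|exact: mem_set|by rewrite -ev -ev'].
apply: (Mmax G'); last by right; split => // q /G0M; left.
split; first by move=> q Mq; left.
move=> /(_ ((b', b'), k (b', b'))) => h.
have /Mcl[/= Bb' _ _] : M ((b', b'), k (b', b')).
  apply: h; right; split => //=; try by right.
  by case=> Bx _; exact: nBB' B'b' Bx.
exact: nBB' B'b' Bb'.
Qed.

End Hess.

Lemma finite_lt T U (A : set T) (B : set U) : finite_set A -> infinite_set B -> card_lt A B.
Proof.
move=> Afin Binf; split; last by move=> /card_le_finite /(_ Afin).
have [n /eq_le An] := Afin.
apply: card_le_trans An _; apply: card_le_trans (subset_card_le (subsetT _)) _.
exact/infiniteP.
Qed.

Lemma lt_le_trans T U V (A : set T) (B : set U) (C : set V) :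
  card_lt A B -> B #<= C -> A #<= C.
Proof. by move=> [AB _] BC; exact: card_le_trans AB BC. Qed.

Lemma le_lt_trans T U V (A : set T) (B : set U) (C : set V) :
  A #<= B -> card_lt B C -> card_lt A C.
Proof.
move=> AB [BC nCB]; split; first exact: card_le_trans AB BC.
by move=> CA; apply: nCB; exact: card_le_trans CA AB.
Qed.

Lemma hessT (T : Type) : infinite_set [set: T] ->
  exists h : T * T -> T, injective h.
Proof.
move=> Tinf; have := hess Tinf; rewrite setXTT => hT.
have [t _] := infinite_setN0 Tinf.
have [h [_ hinj]] := inj_of_le t hT.
by exists h => p q; apply: hinj; rewrite in_setE.
Qed.

Lemma seq_le (T : Type) : infinite_set [set: T] -> [set: seq T] #<= [set: T].
Proof.
move=> Tinf; have [h hinj] := hessT Tinf.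
have [e [_ einj]] := infinite_inj Tinf.
have e01 : e 0%N <> e 1%N by move=> /einj.
pose fix code (s : seq T) : T :=
  if s is x :: s' then h (e 1%N, h (x, code s')) else h (e 0%N, e 0%N).
apply: (@le_of_inj _ _ _ _ code) => // s t _ _.
elim: s t => [|x s IH] [|y t] //=.
- by move=> /hinj [] /e01.
- by move=> /hinj [] /esym /e01.
- by move=> /hinj [] /hinj [-> /IH ->].
Qed.

Lemma enum_fset_inj (T : choiceType) (X Y : finmap.finset_of (Phant T)) :
  finmap.enum_fset X = finmap.enum_fset Y -> X = Y.
Proof.
by case: X Y => [x px] [y py] /= e; move: py; rewrite -e => py; f_equal; exact: Prop_irrelevance.
Qed.

Lemma fin_le (T : Type) : infinite_set [set: T] ->
  [set F : set T | finite_set F] #<= [set: T].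
Proof.
move=> Tinf; apply: card_le_trans (seq_le Tinf).
elim/Pchoice: T => T in Tinf *.
eapply (@le_of_inj _ _ _ _ (fun F : set T => finmap.enum_fset (fset_set F))); first by [].
move=> F G.
rewrite !in_setE => /= Ffin Gfin e.
have e' : fset_set F = fset_set G by apply: enum_fset_inj.
by rewrite -(fset_setK Ffin) -(fset_setK Gfin) e'.
Qed.

Lemma small_bigcup T M (FF : set (set T)) : infinite_set [set: M] ->
  card_lt FF [set: M] -> (forall F, FF F -> finite_set F) ->
  card_lt (\bigcup_(F in FF) F) [set: M].
Proof.
move=> Minf FFlt FFfin.
have [FFf|FFinf] := pselect (finite_set FF).
  by apply: finite_lt Minf; apply: bigcup_finite.
have hU : \bigcup_(F in FF) F #<= FF `*` [set: nat].
  have /choice[phi Hphi] : forall x : T, exists F,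
      (\bigcup_(F in FF) F) x -> FF F /\ F x.
    move=> x; have [[F FF_F Fx]|nx] := pselect ((\bigcup_(F in FF) F) x).
      by exists F.
    by exists set0.
  have /choice[iota Hiota] : forall F : set T, exists io : T -> nat,
      FF F -> {in F &, injective io}.
    move=> F; have [FF_F|nF] := pselect (FF F); last by exists (fun=> 0%N).
    have /finite_set_leP[n Fn] := FFfin F FF_F.
    have Fnat : F #<= [set: nat] by apply: card_le_trans Fn (subset_card_le (subsetT _)).
    by have [io [_ ioinj]] := inj_of_le 0%N Fnat; exists io.
  apply: (@le_of_inj _ _ _ _ (fun x => (phi x, iota (phi x) x))).
    by move=> x /Hphi [].
  move=> x y /set_mem /Hphi [FFx Fx] /set_mem /Hphi [FFy Fy] [e1 e2].
  rewrite -e1 in e2 Fy.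
  by apply: (Hiota _ FFx); rewrite ?in_setE.
apply: le_lt_trans hU _; apply: le_lt_trans FFlt.
apply: card_le_trans (card_leX (card_lexx FF) (iffLR (infiniteP FF) FFinf)) _.
exact: hess.
Qed.

Fixpoint lin T (x : T) (s : list T) : Prop :=
  if s is y :: s' then y = x \/ lin x s' else False.

Lemma finite_list T (DD : set T) : finite_set DD ->
  exists s : list T, forall V, DD V <-> lin V s.
Proof.
elim/Pchoice: T => T in DD *.
move=> /finite_fsetP [X ->]; exists (finmap.enum_fset X) => V /=.
change ((V \in (finmap.enum_fset X : seq T)) <-> lin V (finmap.enum_fset X)).
elim: (finmap.enum_fset X) => [|a s IH] //=.
rewrite in_cons; split.
  by move=> /orP[/eqP ->|/IH]; [left|right].
by move=> [->|/IH ->]; rewrite ?eqxx ?orbT.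
Qed.


Lemma init_cluster lam (X : topologicalType) (BB : set (set X)) :
  initially_compact lam X -> BB #<= [set: lam] -> BB !=set0 ->
  (forall Y, BB Y -> Y !=set0) ->
  (forall Y Y', BB Y -> BB Y' -> exists2 Z, BB Z & Z `<=` Y `&` Y') ->
  exists y, forall Y, BB Y -> closure Y y.
Proof.
move=> Xc BBle [Y0 BBY0] BBne BBdir; apply: contrapT => ncl.
pose CC := (fun Y => ~` closure Y) @` BB.
have [DD [DDC DDlt DDcov]] : exists DD : set (set X),
    [/\ DD `<=` CC, card_lt DD [set: nat] & \bigcup_(U in DD) U = setT].
  apply: Xc.
  - by move=> _ [Y _ <-]; rewrite openC; exact: closed_closure.
  - apply/seteqP; split => // y _; apply: contrapT => ny; apply: ncl; exists y.
    move=> Y BBY; apply: contrapT => nY; apply: ny; exists (~` closure Y) => //.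
    by exists Y.
  - exact: card_le_trans (card_image_le _ _) BBle.
have DDfin : finite_set DD by apply/finite_setPn => h; case: DDlt => _ /(_ h).
have [s Hs] := finite_list DDfin.
have key : forall s' : list (set X), (forall V, lin V s' -> DD V) ->
    exists2 Z, BB Z & forall V, lin V s' -> forall z, Z z -> ~ V z.
  elim=> [|V s' IH] Hs'; first by exists Y0.
  have [Z' BBZ' HZ'] : exists2 Z, BB Z & forall V, lin V s' -> forall z, Z z -> ~ V z.
    by apply: IH => W HW; apply: Hs'; right.
  have [Y BBY eV] : CC V by apply: DDC; apply: Hs'; left.
  have [Z BBZ ZZY] := BBdir _ _ BBZ' BBY.
  exists Z => // W [<-|HW] z Zz.
    by rewrite -eV => /(_ (subset_closure (proj2 (ZZY z Zz)))).
  by apply: HZ' HW z (proj1 (ZZY z Zz)).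
have [Z BBZ HZ] := key s (fun V => proj2 (Hs V)).
have [z Zz] := BBne Z BBZ.
have : (\bigcup_(U in DD) U) z by rewrite DDcov.
by move=> [V DDV Vz]; apply: (HZ V (proj1 (Hs V) DDV) z Zz Vz).
Qed.

Section Core.
Variables (mu nu lam : Type) (X1 X2 : topologicalType) (I : Type).
Variables (C : set (set (X1 * X2))) (delta : I -> set (set (X1 * X2))).

Let Fin := [set F : set (set (X1 * X2)) | finite_set F /\ F `<=` C].

Lemma core :
  interval_compact mu nu X1 -> initially_compact lam X2 ->
  (forall U, C U -> open U) -> \bigcup_(U in C) U = setT ->
  [set: set I] #<= [set: lam] -> Fin #<= [set: nu] ->
  (forall FF : set (set (set (X1 * X2))), FF `<=` Fin ->
      card_lt FF [set: mu] -> exists i, \bigcup_(F in FF) F `<=` delta i) ->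
  exists i, \bigcup_(U in delta i) U = setT.
Proof.
move=> X1c X2c Copen Ccov Ilam Finnu Hdelta.
apply: contrapT => nd.
have /choice[pt Hpt] : forall i, exists p, ~ (\bigcup_(U in delta i) U) p.
  move=> i; apply: contrapT => np; apply: nd; exists i.
  apply/seteqP; split => // p _; apply: contrapT => npi; apply: np; by exists p.
pose x i := (pt i).1; pose y i := (pt i).2.
have [xs Hxs] : exists xs : X1, forall A, open A -> A xs -> forall F, Fin F ->
    exists i, F `<=` delta i /\ A (x i).
  apply: contrapT => nxs.
  have /choice[AF HAF] : forall z : X1, exists AF : set X1 * set (set (X1 * X2)),
      [/\ open AF.1, AF.1 z, Fin AF.2 & forall i, AF.2 `<=` delta i -> ~ AF.1 (x i)].
    move=> z; apply: contrapT => nz; apply: nxs; exists z => A Aop Az F FinF.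
    apply: contrapT => ni; apply: nz; exists (A, F); split => // i Fi Axi.
    by apply: ni; exists i.
  pose Bf F := \bigcup_(z in [set z | (AF z).2 = F]) (AF z).1.
  pose CC := Bf @` Fin.
  have [DD [DDC DDlt DDcov]] : exists DD : set (set X1),
      [/\ DD `<=` CC, card_lt DD [set: mu] & \bigcup_(U in DD) U = setT].
    apply: X1c.
    - move=> _ [F _ <-]; apply: bigcup_open => z _.
      by have [] := HAF z.
    - apply/seteqP; split => // z _; exists (Bf (AF z).2).
        by exists (AF z).2 => //; have [] := HAF z.
      by exists z => //; have [] := HAF z.
    - exact: card_le_trans (card_image_le _ _) Finnu.
  have /choice[pre Hpre] : forall V : set X1, exists F, CC V -> Fin F /\ Bf F = V.
    move=> V; have [[F FinF <-]|nV] := pselect (CC V); first by exists F.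
    by exists set0.
  pose FF := pre @` DD.
  have [i Hi] : exists i, \bigcup_(F in FF) F `<=` delta i.
    apply: Hdelta.
      by move=> _ [V DDV <-]; have [] := Hpre V (DDC V DDV).
    apply: le_lt_trans DDlt; exact: card_image_le.
  have : (\bigcup_(U in DD) U) (x i) by rewrite DDcov.
  move=> [V DDV Vxi].
  have [_ eV] := Hpre V (DDC V DDV).
  rewrite -eV in Vxi; case: Vxi => z /= ez Azx.
  have [_ _ _ Hz] := HAF z; apply: (Hz i) Azx.
  move=> U FU; apply: Hi; exists (pre V); first by exists V.
  by rewrite -ez.
pose S A F := [set i | F `<=` delta i /\ A (x i)].
pose BB := [set Y : set X2 | exists A F, [/\ open A, A xs, Fin F & Y = y @` S A F]].
have FinU : forall F F', Fin F -> Fin F' -> Fin (F `|` F').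
  move=> F F' [Ff FC] [F'f F'C]; split; first by rewrite finite_setU.
  by move=> U [/FC|/F'C].
have [ys Hys] : exists ys, forall Y, BB Y -> closure Y ys.
  apply: (init_cluster X2c).
  - apply: (@card_le_trans _ _ _ ((fun T => y @` T) @` [set: set I])).
      by apply: subset_card_le => _ [A [F [_ _ _ ->]]]; exists (S A F).
    exact: card_le_trans (card_image_le _ _) Ilam.
  - exists (y @` S setT set0); exists setT, set0; split; [exact: openT|by []| |by []].
    split; [exact: finite_set0|by []].
  - move=> _ [A [F [Aop Axs FinF ->]]].
    have [i [Fi Axi]] := Hxs A Aop Axs F FinF.
    by exists (y i); exists i.
  - move=> _ _ [A [F [Aop Axs FinF ->]]] [A' [F' [A'op A'xs FinF' ->]]].
    exists (y @` S (A `&` A') (F `|` F')).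
      exists (A `&` A'), (F `|` F'); split => //; [exact: openI|exact: FinU].
    move=> _ [i [FFi [Ai A'i]] <-]; split; exists i => //; split => //.
    + by move=> U FU; apply: FFi; left.
    + by move=> U FU; apply: FFi; right.
have : (\bigcup_(U in C) U) (xs, ys) by rewrite Ccov.
move=> [U CU Uxy].
have : nbhs (xs, ys) U by apply: open_nbhs_nbhs; split => //; exact: Copen.
move=> [QR [QRx QRy] QRU].
pose A := interior QR.1.
have Aop : open A by exact: open_interior.
have Axs : A xs by apply: nbhs_singleton; apply: nbhs_interior.
have BBY : BB (y @` S A [set U]).
  exists A, [set U]; split => //; split; first exact: finite_set1.
  by move=> V ->.
have [_ [[i [Ui Axi] <-] Ryi]] := Hys _ BBY _ QRy.
apply: (Hpt i); exists U; first exact: Ui.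
have -> : pt i = (x i, y i) by rewrite /x /y; case: (pt i).
apply: QRU; split => //; exact: interior_subset.
Qed.
End Core.

Lemma fin_sub_le T nu (C : set T) : infinite_set [set: nu] -> C #<= [set: nu] ->
  [set F : set T | finite_set F /\ F `<=` C] #<= [set: nu].
Proof.
move=> nuinf Cnu; apply: card_le_trans (fin_le nuinf).
have [n0 _] := infinite_setN0 nuinf.
have [g [_ ginj]] := inj_of_le n0 Cnu.
apply: (@le_of_inj _ _ _ _ (fun F => g @` F)).
  by move=> F [Ffin _]; exact: finite_image.
move=> F F' /set_mem [_ FC] /set_mem [_ F'C] e.
apply/seteqP; split => U FU.
  have : (g @` F') (g U) by rewrite -e; exists U.
  by move=> [U' F'U' /ginj]; rewrite !in_setE => /(_ (F'C _ F'U') (FC _ FU)) <-.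
have : (g @` F) (g U) by rewrite e; exists U.
by move=> [U' FU' /ginj]; rewrite !in_setE => /(_ (FC _ FU') (F'C _ FU)) <-.
Qed.

Lemma part1 (mu nu lam : Type) :
  infinite_set [set: mu] -> infinite_set [set: nu] ->
  [set: set (pow_lt nu mu)] #<= [set: lam] ->
  forall X1 X2 : topologicalType,
     interval_compact mu nu X1 -> initially_compact lam X2 ->
     interval_compact mu nu (X1 * X2)%type.
Proof.
move=> muinf nuinf Plam X1 X2 X1c X2c C Copen Ccov Cnu.
have [n0 _] := infinite_setN0 nuinf.
have [m0 _] := infinite_setN0 muinf.
have [g [gC ginj]] := inj_of_le n0 Cnu.
pose delta (p : pow_lt nu mu) : set (set (X1 * X2)) :=
  [set U | C U /\ exists a, g U = projT2 p a].
have [i Hi] : exists i, \bigcup_(U in delta i) U = setT.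
  apply: (core X1c X2c Copen Ccov Plam (fin_sub_le nuinf Cnu)).
  move=> FF FFfin FFlt.
  set W := \bigcup_(F in FF) F.
  have Wlt : card_lt W [set: mu].
    by apply: small_bigcup => // F /FFfin [].
  have WC : W `<=` C by move=> U [F /FFfin [_ FC] FU]; exact: FC.
  have [j [_ jinj]] := inj_of_le m0 (proj1 Wlt).
  pose Aset := j @` W.
  have Alt : card_lt Aset [set: mu].
    by apply: le_lt_trans Wlt; apply: eq_le; apply: inj_card_eq.
  have /choice[jinv Hjinv] : forall m, exists U, Aset m -> W U /\ j U = m.
    move=> m; have [[U WU <-]|nm] := pselect (Aset m); first by exists U.
    by exists set0.
  pose f (a : sig (proj1_sig (exist (fun A => card_lt A [set: mu]) Aset Alt))) :=
    g (jinv (proj1_sig a)).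
  exists (existT _ (exist (fun A => card_lt A [set: mu]) Aset Alt) f).
  move=> U WU; split; first exact: WC.
  have hU : Aset (j U) by exists U.
  exists (exist _ (j U) hU); rewrite /f /=.
  have [Wj ej] := Hjinv (j U) hU.
  by rewrite (jinj _ _ (mem_set Wj) (mem_set WU) ej).
exists (delta i); split => //.
  by move=> U [].
case: i {Hi} => [[A Alt] f] /=.
set D := delta _.
have [[U0 DU0]|nD] := pselect (exists U, D U); last first.
  have -> : D = set0 by apply/seteqP; split => // U DU; apply: nD; exists U.
  split; first exact: card_ge0.
  by move/card_le0P => mu0; apply: muinf; rewrite mu0; exact: finite_set0.
have [DC0 [a0 _]] := DU0.
have /choice[phi Hphi] : forall U, exists a : sig A, D U -> g U = f a.
  move=> U; have [[_ [a ea]]|nU] := pselect (D U); first by exists a.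
  by exists a0.
have DA : D #<= [set: sig A].
  apply: (@le_of_inj _ _ _ _ phi) => // U V /set_mem DU /set_mem DV e.
  have [CU _] := DU; have [CV _] := DV.
  apply: ginj; rewrite ?in_setE //.
  by rewrite (Hphi U DU) (Hphi V DV) e.
have AsA : [set: sig A] #<= A.
  apply: (@le_of_inj _ _ _ _ (@proj1_sig _ A)); first by move=> [a Aa].
  move=> [a Aa] [b Ab] _ _ /= e; move: Ab; rewrite -e => Ab; congr exist; exact: Prop_irrelevance.
apply: le_lt_trans DA _; apply: le_lt_trans AsA Alt.
Qed.

Lemma wo_exists (T : eqType) : exists R : rel T,
  [/\ (forall x y, R x y \/ R y x), (forall x y, R x y -> R y x -> x = y),
      (forall x y z, R x y -> R y z -> R x z) &
      (forall P : set T, P !=set0 -> exists2 z, P z & forall x, P x -> R z x)].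
Proof.
have [R Rwo] := well_ordering_principle T.
have minP : forall P : set T, P !=set0 -> exists2 z, P z & forall x, P x -> R z x.
  move=> P [p Pp].
  have [|z [[zP zlb] _]] := Rwo (fun x => `[< P x >]).
    by exists p; rewrite unfold_in; apply/asboolP.
  exists z; first by move: zP; rewrite unfold_in => /asboolP.
  by move=> x Px; apply: zlb; rewrite unfold_in; apply/asboolP.
have Rwc : wo_chain R predT by move=> A _; exact: Rwo.
have tot : forall x y, R x y \/ R y x.
  move=> x y; have h := wo_chainW Rwc.
  by have /orP := h x y (isT : x \in predT) (isT : y \in predT).
have anti : forall x y, R x y -> R y x -> x = y.
  by move=> x y Rxy Ryx; apply: (wo_chain_antisymmetric Rwc) => //; rewrite Rxy Ryx.
exists R; split => // x y z Rxy Ryz.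
have [|m Pm Hm] := minP [set t | t = x \/ t = y \/ t = z]; first by exists x; left.
have Rmx := Hm x (or_introl erefl).
have Rmy := Hm y (or_intror (or_introl erefl)).
have Rmz := Hm z (or_intror (or_intror erefl)).
case: Pm => [e|[e|e]]; subst m => //.
  by rewrite (anti x y Rxy Rmx).
by rewrite -(anti y z Ryz Rmy).
Qed.

Lemma lt_eqr T U V (A : set T) (B : set U) (B' : set V) :
  card_lt A B -> B #<= B' -> B' #<= B -> card_lt A B'.
Proof.
move=> [AB nBA] BB' B'B; split; first exact: card_le_trans AB BB'.
by move=> B'A; apply: nBA; exact: card_le_trans BB' B'A.
Qed.

Lemma lt_add1 T U (A : set T) (B : set U) (b : T) :
  infinite_set B -> card_lt A B -> card_lt (A `|` [set b]) B.
Proof.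
move=> Binf AB; have [Afin|Ainf] := pselect (finite_set A).
  by apply: finite_lt Binf; rewrite finite_setU; split.
have [e [eA einj]] := infinite_inj Ainf.
have e01 : e 0%N <> e 1%N by move=> /einj.
have bA : [set b] #<= A.
  by apply: (@le_of_inj _ _ _ _ (fun=> e 0%N)) => // x y; rewrite !in_setE => -> ->.
apply: le_lt_trans AB.
exact: card_le_trans (card_leU (eA 0%N) (eA 1%N) e01 bA) (hess Ainf).
Qed.

Lemma regular_transfer T U (D : set T) (g : T -> U) :
  {in D &, injective g} -> regular_card (g @` D) -> regular_card D.
Proof.
move=> ginj Rg I F IltD FD FltD FU.
have eD : g @` D #= D := inj_card_eq ginj.
apply: (Rg I (fun i => g @` F i)).
- by apply: lt_eqr IltD (eq_ge eD) (eq_le eD).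
- by move=> i _ [x Fx <-]; exists x => //; exact: FD i x Fx.
- move=> i; apply: le_lt_trans (card_image_le _ _) _.
  exact: lt_eqr (FltD i) (eq_ge eD) (eq_le eD).
- rewrite -FU; apply/seteqP; split.
    by move=> _ [i _ [x Fx <-]]; exists x => //; exists i.
  by move=> _ [x [i _ Fx] <-]; exists i => //; exists x.
Qed.

Lemma pow_le T U : [set: T] #<= [set: U] -> [set: set T] #<= [set: set U].
Proof.
move=> TU; have [[t _]|nT] := pselect (exists t : T, True).
  have [f [_ finj]] := inj_of_le' TU (ex_intro _ t I).
  apply: (@le_of_inj _ _ _ _ (fun S => f @` S)) => // S S' _ _ e.
  apply/seteqP; split => x Sx.
    have : (f @` S') (f x) by rewrite -e; exists x.
    by move=> [x' S'x' /finj]; rewrite !in_setE => /(_ I I) <-.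
  have : (f @` S) (f x) by rewrite e; exists x.
  by move=> [x' Sx' /finj]; rewrite !in_setE => /(_ I I) <-.
apply: (@le_of_inj _ _ _ _ (fun=> set0)) => // S S' _ _ _.
by apply/seteqP; split => x; case: nT; exists x.
Qed.

Lemma part2 (mu nu lam : Type) :
  infinite_set [set: mu] -> infinite_set [set: nu] ->
  (forall K : set nu, [set: mu] #<= K -> regular_card K) ->
  [set: set nu] #<= [set: lam] ->
  forall X1 X2 : topologicalType,
     interval_compact mu nu X1 -> initially_compact lam X2 ->
     interval_compact mu nu (X1 * X2)%type.
Proof.
move=> muinf nuinf Hreg Plam X1 X2 X1c X2c C Copen Ccov Cnu.
have [n0 _] := infinite_setN0 nuinf.
have [g [gC ginj]] := inj_of_le n0 Cnu.
have [D0 [D0C D0cov] Hmin] := @min_card _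
  [set D : set (set (X1 * X2)) | D `<=` C /\ \bigcup_(U in D) U = setT]
  (ex_intro _ C (conj (fun _ h => h) Ccov)).
have [lt0|nlt0] := pselect (card_lt D0 [set: mu]); first by exists D0.
exfalso.
have muD0 : [set: mu] #<= D0.
  have [D0mu|//] := card_le_total D0 [set: mu].
  have [//|nmu] := pselect ([set: mu] #<= D0).
  by exfalso; apply: nlt0; split.
have D0nu : D0 #<= [set: nu] := card_le_trans (subset_card_le D0C) Cnu.
have D0inf : infinite_set D0 by move=> /(card_le_finite muD0).
have [R [Rtot Ranti Rtrans Rmin]] := wo_exists (set (X1 * X2)).
pose Fs d := [set x | D0 x /\ R x d /\ x <> d].
have [D' [D'D0 D0D' D'prop]] : exists D' : set (set (X1 * X2)),
    [/\ D' `<=` D0, D0 #<= D' &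
        forall d, D' d -> Fs d `<=` D' /\ card_lt (Fs d) D0].
  have [Sne|Se] := pselect ((fun d => D0 d /\ D0 #<= Fs d) !=set0).
    have [d0 [D0d0 D0Fd0] d0min] := Rmin _ Sne.
    exists (Fs d0); split => //; first by move=> x [].
    move=> d [D0d [Rdd0 dd0]]; split.
      move=> x [D0x [Rxd xd]]; split => //; split; first exact: Rtrans Rxd Rdd0.
      by move=> xd0; subst x; apply: dd0; apply: Ranti.
    split; first by apply: subset_card_le => x [].
    by move=> D0Fd; apply: dd0; apply: Ranti => //; apply: d0min.
  exists D0; split => // d D0d; split; first by move=> x [].
  split; first by apply: subset_card_le => x [].
  by move=> D0Fd; apply: Se; exists d.
have D'C : D' `<=` C by move=> x /D'D0 /D0C.
have D'reg : regular_card D'.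
  apply: (@regular_transfer _ _ _ g).
    by move=> x y /set_mem/D'C xC /set_mem/D'C yC; apply: ginj; rewrite in_setE.
  apply: Hreg; apply: card_le_trans muD0 _; apply: card_le_trans D0D' _.
  apply: eq_ge; apply: inj_card_eq.
  by move=> x y /set_mem/D'C xC /set_mem/D'C yC; apply: ginj; rewrite in_setE.
have [d00 D0d00] : D0 !=set0.
  by apply: le_nonempty muD0 _; apply: infinite_setN0.
have [k [kD' kinj]] := inj_of_le d00 D0D'.
pose I := {d | D' d}.
pose delta (d : I) := [set U | D0 U /\ Fs (proj1_sig d) (k U)].
have [i Hi] : exists i, \bigcup_(U in delta i) U = setT.
  apply: (@core mu nu lam X1 X2 I D0 delta X1c X2c).
  - by move=> U /D0C; exact: Copen.
  - exact: D0cov.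
  - apply: card_le_trans _ Plam; apply: pow_le.
    apply: (@le_of_inj _ _ _ _ (fun d : I => g (proj1_sig d))) => //.
    move=> [a Da] [b Db] _ _ /= e.
    have eab : a = b by apply: ginj; rewrite ?in_setE //; exact: D'C.
    by move: Db; rewrite -eab => Db; congr exist; exact: Prop_irrelevance.
  - exact: fin_sub_le nuinf D0nu.
  move=> FF FFfin FFlt.
  set W := \bigcup_(F in FF) F.
  have Wlt : card_lt W [set: mu] by apply: small_bigcup => // F /FFfin [].
  have WD0 : W `<=` D0 by move=> U [F /FFfin [_ FC] FU]; exact: FC.
  pose W' := k @` W.
  have W'lt : card_lt W' [set: mu] by apply: le_lt_trans Wlt; exact: card_image_le.
  have W'D' : W' `<=` D' by move=> _ [U WU <-]; apply: kD'; exact: WD0.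
  have W'ltD' : card_lt W' D'.
    split; first exact: subset_card_le.
    move=> D'W'; case: W'lt => _; apply.
    by apply: card_le_trans muD0 _; apply: card_le_trans D0D' D'W'.
  pose F (w : {w | W' w}) := [set x | D' x /\ R x (proj1_sig w)].
  have nU : \bigcup_i F i <> D'.
    apply: D'reg.
    - apply: le_lt_trans W'ltD'.
      apply: (@le_of_inj _ _ _ _ (fun w : {w | W' w} => proj1_sig w)).
        by move=> [w Ww].
      move=> [a Wa] [b Wb] _ _ /= e.
      by move: Wb; rewrite -e => Wb; congr exist; exact: Prop_irrelevance.
    - by move=> w x [].
    - move=> [w Ww] /=.
      have D'w := W'D' w Ww.
      have : card_lt (Fs w `|` [set w]) D0.
        by apply: lt_add1 D0inf _; exact: (proj2 (D'prop w D'w)).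
      move=> /lt_eqr /(_ D0D') /(_ (subset_card_le D'D0)).
      apply: le_lt_trans; apply: subset_card_le => x [D'x Rxw] /=.
      have [->|xw] := pselect (x = w); first by right.
      by left; split => //; exact: D'D0.
  have [d [D'd nd]] : exists d, D' d /\ ~ (\bigcup_i F i) d.
    apply: contrapT => nex; apply: nU; apply/seteqP; split.
      by move=> x [w _ []].
    move=> x D'x; apply: contrapT => nx; apply: nex; by exists x.
  exists (exist _ d D'd) => U WU; split; first exact: WD0.
  have kW' : W' (k U) by exists U.
  have nR : ~ R d (k U).
    by move=> Rdk; apply: nd; exists (exist _ (k U) kW').
  split; first exact: D'D0 (W'D' _ kW').
  split; first by have [|] := Rtot (k U) d => // /nR.
  move=> /= e; apply: nR; rewrite -e.
  by have [] := Rtot (k U) (k U).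
have [D'i Fi] := D'prop (proj1_sig i) (proj2_sig i).
have D0le : D0 #<= delta i.
  by apply: Hmin; split => //; move=> U [/D0C].
case: Fi => _; apply; apply: card_le_trans D0le _.
apply: (@le_of_inj _ _ _ _ k) => //; first by move=> U [].
by move=> U V /set_mem [D0U _] /set_mem [D0V _]; apply: kinj; rewrite in_setE.
Qed.

Unset Implicit Arguments.
Set Strict Implicit.

Theorem proposition3p2 (mu nu lam : Type) :
  infinite_set [set: mu] -> infinite_set [set: nu] -> infinite_set [set: lam] ->
  [set: mu] #<= [set: nu] ->
  (* first part: 2^(nu^{<mu}) <= lambda *)
  ([set: set (pow_lt nu mu)] #<= [set: lam] ->
   forall X1 X2 : topologicalType, inhabited X1 -> inhabited X2 ->
     interval_compact mu nu X1 -> initially_compact lam X2 ->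
     interval_compact mu nu (X1 * X2)%type) /\
  (* second part: all cardinals in [mu, nu] regular, and 2^nu <= lambda *)
  ((forall K : set nu, [set: mu] #<= K -> regular_card K) ->
   [set: set nu] #<= [set: lam] ->
   forall X1 X2 : topologicalType, inhabited X1 -> inhabited X2 ->
     interval_compact mu nu X1 -> initially_compact lam X2 ->
     interval_compact mu nu (X1 * X2)%type).
Proof.
move=> muinf nuinf laminf munu; split.
  move=> Plam X1 X2 _ _; exact: part1 muinf nuinf Plam X1 X2.
move=> Hreg Plam X1 X2 _ _; exact: part2 muinf nuinf Hreg Plam X1 X2.
Qed.
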